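(* The synchronous nonlinear fixed-point iteration $\mathbf{x}^{p+1} = \mathbf{h}(\mathbf{x}^p)$ is locally convergent, that is, if $\mathbf{x}_*$ is a fixed point of $\mathbf{h}$, it is a point of attraction of the synchronous iteration.
   Context: Let $\mathbf{A}\in\mathbb{R}^{n\times n}$ be partitioned into square $b\times b$ blocks, and $S_B$ a set of block indices containing all diagonal blocks. The unknowns (entries of the block ILU factors $\mathbf{L}_{ij}$, $i>j$, and $\mathbf{U}_{ij}$, $i\le j$, for $(i,j)\in S_B$) form $\mathbf{x}\in\mathbb{R}^m$, $m=|S_B|b^2$, with $\mathbf{X}_{ij}$ the $b\times b$ block for index $(i,j)$. The map $\mathbf{h}:D_B\to\mathbb{R}^m$ is given blockwise by $\mathbf{H}_{ij}(\mathbf{x})=(\mathbf{A}_{ij}-\sum_{k=1}^{j-1}\mathbf{X}_{ik}\mathbf{X}_{kj})\mathbf{X}_{jj}^{-1}$ for $i>j$ and $\mathbf{H}_{ij}(\mathbf{x})=\mathbf{A}_{ij}-\sum_{k=1}^{i-1}\mathbf{X}_{ik}\mathbf{X}_{kj}$ for $i\le j$, on $D_B:=\{\mathbf{x}: \mathbf{X}_{jj}\text{ nonsingular for all diagonal blocks}\}$. Its fixed points are the block ILU factorizations with pattern $S_B$. *)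

(* Defs.v *)
From HB Require Import structures.
From mathcomp Require Import all_boot all_order all_algebra.
From mathcomp Require Import all_classical all_reals all_analysis.
Set Implicit Arguments. Unset Strict Implicit. Unset Printing Implicit Defensive.
Import Order.TTheory GRing.Theory Num.Theory.
Import numFieldNormedType.Exports.
Local Open Scope ring_scope.
Local Open Scope classical_set_scope.

(* Block indices: 'I_N x 'I_N (0-based).  The sparsity pattern S_B is a set of
   block indices; the unknowns are the b x b blocks X_ij, (i,j) \in S_B. *)
Definition bidx (N : nat) (SB : {set 'I_N * 'I_N}) : Type :=
  {ij : 'I_N * 'I_N | ij \in SB}.

(* The unknown vector x in R^m, m = |S_B| b^2, as a family of b x b blocks. *)
Definition bstate (R : realType) (N b : nat) (SB : {set 'I_N * 'I_N}) :=
  bidx SB -> 'M[R]_b.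

(* X_ik : the block of x at (i,k) if (i,k) \in S_B, and 0 otherwise
   (entries outside the pattern of the ILU factors vanish). *)
Definition blk (R : realType) (N b : nat) (SB : {set 'I_N * 'I_N})
    (x : bstate R b SB) (i k : 'I_N) : 'M[R]_b :=
  match (insub (i, k) : option (bidx SB)) with
  | Some s => x s
  | None => 0
  end.

Definition hmap (R : realType) (N b : nat) (A : 'I_N -> 'I_N -> 'M[R]_b)
    (SB : {set 'I_N * 'I_N}) (x : bstate R b SB) : bstate R b SB :=
  fun s =>
    let i := (val s).1 in let j := (val s).2 in
    if (j < i)%N then
      (A i j - \sum_(k < N | (k < j)%N) (blk x i k *m blk x k j))
        *m invmx (blk x j j)
    else
      A i j - \sum_(k < N | (k < i)%N) (blk x i k *m blk x k j).

Definition in_DB (R : realType) (N b : nat) (SB : {set 'I_N * 'I_N})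
    (x : bstate R b SB) : Prop :=
  forall j : 'I_N, blk x j j \in unitmx.

(* x* is a point of attraction of the iteration x^{p+1} = G(x^p) on domain D
   (Ortega--Rheinboldt): there is an open neighbourhood of x* (here a ball
   for the max-norm over all entries, which is no loss of generality in
   finite dimension) such that for every starting point in it the iterates
   are well defined (stay in D) and converge to x*. *)
Definition point_of_attraction (R : realType) (I : Type) (b : nat)
    (G : (I -> 'M[R]_b) -> (I -> 'M[R]_b)) (D : (I -> 'M[R]_b) -> Prop)
    (xs : I -> 'M[R]_b) : Prop :=
  exists2 delta : R, 0 < delta &
    forall x0 : I -> 'M[R]_b,
      (forall s i j, `|x0 s i j - xs s i j| < delta) ->
      (forall p : nat, D (iter p G x0)) /\
      (forall s i j, (fun p : nat => iter p G x0 s i j) @ \oo --> xs s i j).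

(* Main.v *)
Require Import Defs.
From HB Require Import structures.
From mathcomp Require Import all_boot all_order all_algebra.
From mathcomp Require Import all_classical all_reals all_analysis.
Import Order.TTheory GRing.Theory Num.Theory.
Import numFieldNormedType.Exports.
Local Open Scope ring_scope.
Local Open Scope classical_set_scope.
Set Implicit Arguments. Unset Strict Implicit. Unset Printing Implicit Defensive.

Section Cv.
Variables (R : realType) (T : Type) (F : set_system T) (FF : Filter F).

Definition mcv m n (M : T -> 'M[R]_(m,n)) (L : 'M[R]_(m,n)) :=
  forall a c, (fun x => M x a c) @ F --> L a c.
Arguments mcv {m n}.

Lemma cv_sum (I : Type) (r : seq I) (P : pred I) (f : I -> T -> R) (l : I -> R) :
  (forall i, f i @ F --> l i) ->
  (fun x => \sum_(i <- r | P i) f i x) @ F --> \sum_(i <- r | P i) l i.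
Proof.
move=> H; elim: r => [|i r IH].
  have -> : (fun x => \sum_(j <- [::] | P j) f j x) = fun _ => 0.
    by apply/funext => x; rewrite big_nil.
  rewrite big_nil; exact: cvg_cst.
have -> : (fun x => \sum_(j <- i :: r | P j) f j x) =
  fun x => if P i then f i x + \sum_(j <- r | P j) f j x else \sum_(j <- r | P j) f j x.
  by apply/funext => x; rewrite big_cons.
rewrite big_cons; case: (P i) => //; exact: cvgD.
Qed.

Lemma cv_prod (I : Type) (r : seq I) (P : pred I) (f : I -> T -> R) (l : I -> R) :
  (forall i, f i @ F --> l i) ->
  (fun x => \prod_(i <- r | P i) f i x) @ F --> \prod_(i <- r | P i) l i.
Proof.
move=> H; elim: r => [|i r IH].
  have -> : (fun x => \prod_(j <- [::] | P j) f j x) = fun _ => 1.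
    by apply/funext => x; rewrite big_nil.
  rewrite big_nil; exact: cvg_cst.
have -> : (fun x => \prod_(j <- i :: r | P j) f j x) =
  fun x => if P i then f i x * \prod_(j <- r | P j) f j x else \prod_(j <- r | P j) f j x.
  by apply/funext => x; rewrite big_cons.
rewrite big_cons; case: (P i) => //; exact: cvgM.
Qed.

Lemma mcv_cst m n (L : 'M[R]_(m,n)) : mcv (fun _ => L) L.
Proof. move=> a c; exact: cvg_cst. Qed.

Lemma mcv_sub m n (M P : T -> 'M[R]_(m,n)) LM LP :
  mcv M LM -> mcv P LP -> mcv (fun x => M x - P x) (LM - LP).
Proof.
move=> HM HP a c.
have -> : (fun x => (M x - P x) a c) = fun x => M x a c - P x a c.
  by apply/funext => x; rewrite !mxE.
rewrite !mxE; exact: cvgB.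
Qed.

Lemma mcv_sum m n (I : Type) (r : seq I) (Pr : pred I) (M : I -> T -> 'M[R]_(m,n)) L :
  (forall i, mcv (M i) (L i)) ->
  mcv (fun x => \sum_(i <- r | Pr i) M i x) (\sum_(i <- r | Pr i) L i).
Proof.
move=> H a c.
have -> : (fun x => (\sum_(i <- r | Pr i) M i x) a c) = fun x => \sum_(i <- r | Pr i) M i x a c.
  by apply/funext => x; rewrite summxE.
rewrite summxE; apply: cv_sum => i; exact: H.
Qed.

Lemma mcv_mul m n p (M : T -> 'M[R]_(m,n)) (P : T -> 'M[R]_(n,p)) LM LP :
  mcv M LM -> mcv P LP -> mcv (fun x => M x *m P x) (LM *m LP).
Proof.
move=> HM HP a c.
have -> : (fun x => (M x *m P x) a c) = fun x => \sum_j M x a j * P x j c.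
  by apply/funext => x; rewrite !mxE.
rewrite !mxE; apply: cv_sum => j; exact: cvgM.
Qed.

Lemma cv_det n (M : T -> 'M[R]_n) L : mcv M L -> (fun x => \det (M x)) @ F --> \det L.
Proof.
move=> HM; rewrite /determinant; apply: cv_sum => s.
apply: cvgM; first exact: cvg_cst.
apply: cv_prod => i; exact: HM.
Qed.

Lemma mcv_minor n (M : T -> 'M[R]_n.+1) L i j :
  mcv M L -> mcv (fun x => row' i (col' j (M x))) (row' i (col' j L)).
Proof.
move=> HM a c.
have -> : (fun x => row' i (col' j (M x)) a c) = fun x => M x (lift i a) (lift j c).
  by apply/funext => x; rewrite !mxE.
rewrite !mxE; exact: HM.
Qed.

Lemma mcv_adj n (M : T -> 'M[R]_n) L : mcv M L -> mcv (fun x => \adj (M x)) (\adj L).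
Proof.
case: n M L => [|n] M L HM a c; first by case: a.
have -> : (fun x => (\adj (M x)) a c) = fun x => (-1) ^+ (c + a) * \det (row' c (col' a (M x))).
  by apply/funext => x; rewrite !mxE.
rewrite !mxE /cofactor; apply: cvgM; first exact: cvg_cst.
apply: cv_det; exact: mcv_minor.
Qed.

Lemma cv_ev_ne0 (f : T -> R) l : l != 0 -> f @ F --> l -> F (fun x => f x != 0).
Proof.
move=> l0 Hf.
have l0p : 0 < `|l| by rewrite normr_gt0.
have H := @cvgr_dist_lt _ _ _ F FF f l Hf _ l0p.

apply: (@filterS _ F FF _ _ _ H) => x Hx; apply/eqP => fx0.
by move: Hx; rewrite fx0 subr0 ltxx.
Qed.

Lemma mcv_inv n (M : T -> 'M[R]_n) L :
  mcv M L -> L \in unitmx -> mcv (fun x => invmx (M x)) (invmx L).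
Proof.
move=> HM UL a c.
have dL : \det L != 0 by rewrite -unitfE -unitmxE.
have Hd := cv_det HM.
have Hg : (fun x => (\det (M x))^-1 * \adj (M x) a c) @ F --> (invmx L) a c.
  rewrite /invmx UL mxE.
  apply: cvgM; first exact: cvgV.
  exact: mcv_adj.
apply: cvg_trans Hg.
apply: near_eq_cvg.
have H := cv_ev_ne0 dL Hd.
near=> x.
rewrite /invmx unitmxE unitfE ifT ?mxE //.
near: x; exact: H.
Unshelve. all: by end_near.
Qed.

End Cv.

Section Spec.
Variables (R : realType) (N b : nat) (A : 'I_N -> 'I_N -> 'M[R]_b)
  (SB : {set 'I_N * 'I_N}) (xs : bstate R b SB).

Definition close (d : R) (x y : bstate R b SB) :=
  forall s i j, `|x s i j - y s i j| < d.

Definition FB : set_system (bstate R b SB) :=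
  filter_from (fun d : R => 0 < d) (fun d => [set x | close d x xs]).

Lemma FB_filter : Filter FB.
Proof.
apply: filter_from_filter; first by exists 1.
move=> d1 d2 d10 d20; exists (Num.min d1 d2); first by rewrite lt_min d10 d20.
move=> x /= Hx; split => s i j; apply: (lt_le_trans (Hx s i j)); by rewrite ge_min lexx ?orbT.
Qed.

Lemma mcv_blk i k : mcv FB (fun x => blk x i k) (blk xs i k).
Proof.
have FF := FB_filter.
rewrite /blk; case: insubP => [s _ _|_]; last exact: mcv_cst.
move=> a c; apply/cvgrPdist_lt => e e0.
exists e => // x /= Hx; rewrite distrC; exact: Hx.
Qed.

Lemma mcv_hmap s : in_DB xs -> mcv FB (fun x => hmap A x s) (hmap A xs s).
Proof.
have FF := FB_filter.
move=> HD; rewrite /hmap; case: ifP => _.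
  apply: mcv_mul.
    apply: mcv_sub; first exact: mcv_cst.
    apply: mcv_sum => k; apply: mcv_mul; exact: mcv_blk.
  apply: mcv_inv; [exact: mcv_blk | exact: HD].
apply: mcv_sub; first exact: mcv_cst.
apply: mcv_sum => k; apply: mcv_mul; exact: mcv_blk.
Qed.

Lemma FB_elim (P : bstate R b SB -> Prop) : FB P ->
  exists2 d, 0 < d & forall x, close d x xs -> P x.
Proof. by case=> d d0 H; exists d => // x Hx; apply: H. Qed.

Lemma hmap_cont : in_DB xs -> hmap A xs = xs -> forall e, 0 < e ->
  exists2 d, 0 < d & forall x, close d x xs -> close e (hmap A x) xs.
Proof.
move=> HD Hfix e e0.
have FF := FB_filter.
have H : FB (fun x => forall t : (bidx SB * 'I_b * 'I_b),
    `|xs t.1.1 t.1.2 t.2 - hmap A x t.1.1 t.1.2 t.2| < e).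
  apply: (@filter_forall _ _ (fun (t : bidx SB * 'I_b * 'I_b) (x : bstate R b SB) =>
    `|xs t.1.1 t.1.2 t.2 - hmap A x t.1.1 t.1.2 t.2| < e) FB FF) => -[[s i] j] /=.
  have := @mcv_hmap s HD i j; rewrite Hfix => Hc.
  exact: (@cvgr_dist_lt _ _ _ FB FF _ _ Hc _ e0).
have [d d0 Hd] := FB_elim H.
exists d => // x Hx s i j; rewrite distrC; exact: (Hd x Hx (s, i, j)).
Qed.

Lemma DB_near : in_DB xs -> exists2 d, 0 < d & forall x, close d x xs -> in_DB x.
Proof.
move=> HD.
have FF := FB_filter.
have H : FB (fun x => forall j : 'I_N, \det (blk x j j) != 0).
  apply: (@filter_forall _ _ (fun (j : 'I_N) (x : bstate R b SB) =>
    \det (blk x j j) != 0) FB FF) => j.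
  have Hc := @cv_det _ _ _ FF _ _ _ (@mcv_blk j j).
  apply: (cv_ev_ne0 FF _ Hc).
  by rewrite -unitfE -unitmxE.
have [d d0 Hd] := FB_elim H.
exists d => // x Hx j; rewrite unitmxE unitfE; exact: Hd.
Qed.

End Spec.

From mathcomp Require Import zify.

Section Exact.
Variables (R : realType) (N b : nat) (A : 'I_N -> 'I_N -> 'M[R]_b)
  (SB : {set 'I_N * 'I_N}) (xs : bstate R b SB).

Definition lev (ij : 'I_N * 'I_N) : nat :=
  if (ij.2 < ij.1)%N then (ij.2 * 2).+1 else (ij.1 * 2)%N.

Lemma blk_eq (y : bstate R b SB) p :
  (forall s : bidx SB, (lev (val s) < p)%N -> y s = xs s) ->
  forall i k, (lev (i, k) < p)%N -> blk y i k = blk xs i k.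
Proof.
move=> H i k Hl; rewrite /blk; case: insubP => [s _ Hv|_] //.
by apply: H; rewrite Hv.
Qed.

Lemma iter_exact : hmap A xs = xs -> forall p x (s : bidx SB),
  (lev (val s) < p)%N -> iter p (@hmap R N b A SB) x s = xs s.
Proof.
move=> Hfix; elim=> [|p IH] x s //.
rewrite iterS -[in RHS]Hfix => Hl.
have E := blk_eq (IH x).
case: s Hl => -[i j] Hij; rewrite /hmap /lev /=.
case: ifP => Hji Hl.
- congr ((_ - _) *m invmx _); last by apply: E; rewrite /lev /= ltnn; lia.
  apply: eq_bigr => k Hk; rewrite !E //; rewrite /lev /=; case: ifP => ?; lia.
- move/negbT: Hji => Hji.
  congr (_ - _); apply: eq_bigr => k Hk; rewrite !E //; rewrite /lev /=; case: ifP => ?; lia.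
Qed.

Lemma iter_done : hmap A xs = xs -> forall p x, (N * 2 <= p)%N -> iter p (@hmap R N b A SB) x = xs.
Proof.
move=> Hfix p x Hp; apply/funext => s; apply: iter_exact => //.
case: s => -[i j] /= _; rewrite /lev /=.
have := ltn_ord i; have := ltn_ord j; case: ifP => ?; lia.
Qed.

End Exact.

Lemma close_le (R : realType) (N b : nat) (SB : {set 'I_N * 'I_N}) (d d' : R)
  (x y : bstate R b SB) : d <= d' -> close d x y -> close d' x y.
Proof. by move=> le H s i j; apply: lt_le_trans (H s i j) le. Qed.

Theorem theorem5 (R : realType) (N b : nat) (A : 'I_N -> 'I_N -> 'M[R]_b)
    (SB : {set 'I_N * 'I_N})
    (hdiag : forall j : 'I_N, (j, j) \in SB)
    (xs : bstate R b SB) :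
  in_DB xs -> hmap A xs = xs ->
  point_of_attraction (@hmap R N b A SB) (@in_DB R N b SB) xs.
Proof.
move=> HD Hfix.
have chain : forall K e, 0 < e -> exists2 d, 0 < d & forall x, close d x xs ->
    forall p, (p <= K)%N -> close e (iter p (@hmap R N b A SB) x) xs.
  elim=> [|K IH] e e0.
    by exists e => // x Hx p; rewrite leqn0 => /eqP ->.
  have [d1 d10 H1] := IH e e0.
  have [d2 d20 H2] := hmap_cont HD Hfix d10.
  exists (Num.min d1 d2); first by rewrite lt_min d10 d20.
  move=> x Hx [|p] Hp.
    apply: (H1 x _ 0%N (leq0n _)); apply: close_le Hx; by rewrite ge_min lexx.
  rewrite iterSr; apply: H1 => //; apply: H2; apply: close_le Hx; by rewrite ge_min lexx orbT.
have [d0 d00 Hd0] := DB_near HD.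
have [d d0p Hd] := chain (N * 2)%N d0 d00.
exists d => // x0 Hx0; split.
- move=> p; case: (leqP p (N * 2)) => Hp.
  + by apply: Hd0; apply: Hd.
  + by rewrite (iter_done Hfix) // ltnW.
- move=> s i j; apply: cvg_near_cst.
  exists (N * 2)%N => // p /= Hp; by rewrite (iter_done Hfix).
Qed.
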